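(* Let $S$ be a right coherent monoid and let $A$ be a (right) $S$-act. Then $A$ is almost pure if and only if $A$ is absolutely pure.
   Context: Let $S$ be a monoid. A (right) $S$-act is a set $A$ with a map $A\times S\to A$, $(a,s)\mapsto as$, such that $a1=a$ and $a(st)=(as)t$ for all $a\in A$, $s,t\in S$; $S$-morphisms, subacts and congruences of $S$-acts are defined as usual for unary algebras. For a set $X$, the free $S$-act $F_S(X)$ consists of all formal products $xs$ ($x\in X$, $s\in S$), with $xs=yt$ iff $x=y$ and $s=t$, and action $(xs)t=x(st)$. An $S$-act is finitely presented if it is isomorphic to $F_S(X)/\rho$ with $X$ finite and $\rho$ a finitely generated congruence; it is finitely generated if it equals $a_1S\cup\dots\cup a_nS$ for finitely many elements. $S$ is right coherent if every finitely generated subact of every finitely presented $S$-act is finitely presented. Given an $S$-act $A$ and a set $X$ of variables, an equation over $A$ is an expression of one of the forms $xs=yt$, $xs=xt$ or $xs=a$ with $x,y\in X$, $s,t\in S$, $a\in A$. If $A$ is a subact of an $S$-act $B$, a solution in $B$ of a set $\Sigma$ of equations over $A$ is a family $(b_x)_{x\in X}$ in $B$ with $b_xs=b_yt$ for each equation $xs=yt$ in $\Sigma$ and $b_xs=a$ for each equation $xs=a$ in $\Sigma$. $\Sigma$ is consistent if it has a solution in some $S$-act containing $A$ as a subact. For $n\in\mathbb N$, $A$ is $n$-absolutely pure if every finite consistent set of equations over $A$ involving at most $n$ variables has a solution in $A$; $A$ is almost pure if it is $1$-absolutely pure, and absolutely pure if it is $n$-absolutely pure for every $n\in\mathbb N$.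 *)

(* Defs.v *)
From Stdlib Require Import ProofIrrelevance List.
From mathcomp Require Import all_boot.
Set Implicit Arguments. Unset Strict Implicit. Unset Printing Implicit Defensive.

Record monoid := Monoid {
  mcar :> Type;
  mmul : mcar -> mcar -> mcar;
  mone : mcar;
  mmulA : forall a b c, mmul a (mmul b c) = mmul (mmul a b) c;
  mmul1s : forall a, mmul mone a = a;
  mmuls1 : forall a, mmul a mone = a }.

Record act (S : monoid) := Act {
  acar :> Type;
  aact : acar -> S -> acar;
  aact1 : forall a, aact a (mone S) = a;
  aactM : forall a s t, aact a (@mmul S s t) = aact (aact a s) t }.


Section Acts.
Variable S : monoid.

Definition is_morphism (A B : act S) (f : A -> B) : Prop :=
  forall (a : A) (s : S), f (aact a s) = aact (f a) s.

Definition subact_closed (A : act S) (P : A -> Prop) : Prop :=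
  forall (a : A) (s : S), P a -> P (aact a s).

Section Sub.
Variables (A : act S) (P : A -> Prop) (HP : subact_closed P).
Definition sub_aact (u : {a : A | P a}) (s : S) : {a : A | P a} :=
  exist P (aact (proj1_sig u) s) (HP s (proj2_sig u)).
Lemma sub_aact1 u : sub_aact u (mone S) = u.
Proof.
case: u => a Pa; rewrite /sub_aact /=.
apply: eq_sig_hprop => /=; first by move=> x p q; apply: proof_irrelevance.
by rewrite aact1.
Qed.
Lemma sub_aactM u s t : sub_aact u (@mmul S s t) = sub_aact (sub_aact u s) t.
Proof.
case: u => a Pa; rewrite /sub_aact /=.
apply: eq_sig_hprop => /=; first by move=> x p q; apply: proof_irrelevance.
by rewrite aactM.
Qed.
Definition sub_act : act S := Act sub_aact1 sub_aactM.
End Sub.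

Definition fin_generated (A : act S) (P : A -> Prop) : Prop :=
  exists gens : list A,
    (forall g, In g gens -> P g) /\
    (forall a, P a <-> exists g s, In g gens /\ a = aact g s).

(* The free S-act F_S(X) on the finite set X = 'I_m: elements x s. *)
Section Free.
Variable m : nat.
Definition free_aact (u : 'I_m * S) (t : S) : 'I_m * S := (u.1, @mmul S u.2 t).
Lemma free_aact1 u : free_aact u (mone S) = u.
Proof. by case: u => x s; rewrite /free_aact /= mmuls1. Qed.
Lemma free_aactM u s t : free_aact u (@mmul S s t) = free_aact (free_aact u s) t.
Proof. by case: u => x r; rewrite /free_aact /= mmulA. Qed.
Definition free_act : act S := Act free_aact1 free_aactM.
End Free.

Definition is_congruence (A : act S) (rho : A -> A -> Prop) : Prop :=
  (forall a, rho a a) /\ (forall a b, rho a b -> rho b a) /\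
  (forall a b c, rho a b -> rho b c -> rho a c) /\
  (forall a b s, rho a b -> rho (aact a s) (aact b s)).

Definition gen_congruence (A : act S) (R : list (A * A)) (a b : A) : Prop :=
  forall rho : A -> A -> Prop, is_congruence rho ->
    (forall p, In p R -> rho p.1 p.2) -> rho a b.

(* A is finitely presented: A is isomorphic to F_S(X)/rho with X finite and
   rho a finitely generated congruence; i.e. there is a surjective S-morphism
   F_S(X) -> A whose kernel is a finitely generated congruence. *)
Definition fin_presented (A : act S) : Prop :=
  exists (m : nat) (R : list ((free_act m) * (free_act m)))
         (f : free_act m -> A),
    is_morphism f /\ (forall a, exists u, f u = a) /\
    (forall u v, f u = f v <-> gen_congruence R u v).

Definition right_coherent : Prop :=
  forall (F : act S), fin_presented F ->
  forall (P : F -> Prop) (HP : subact_closed P),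
    fin_generated P -> fin_presented (sub_act HP).

(* Equations over A in variables X: x s = y t (this includes the form
   x s = x t, taking y = x) and x s = a. *)
Inductive equation (X : Type) (A : act S) : Type :=
  | EqVar : X -> S -> X -> S -> equation X A
  | EqConst : X -> S -> A -> equation X A.

Definition is_solution (X : Type) (A B : act S) (f : A -> B)
    (E : list (equation X A)) (b : X -> B) : Prop :=
  forall e, In e E ->
    match e with
    | EqVar x s y t => aact (b x) s = aact (b y) t
    | EqConst x s a => aact (b x) s = f a
    end.

(* E is consistent: solvable in some S-act containing A as a subact
   (i.e. into which A embeds by an injective S-morphism). *)
Definition consistent (X : Type) (A : act S) (E : list (equation X A)) : Prop :=
  exists (B : act S) (f : A -> B),
    is_morphism f /\ injective f /\ exists b : X -> B, is_solution f E b.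

(* n-absolutely pure: every finite consistent system in at most n variables
   (w.l.o.g. the variables 'I_n) has a solution in A. *)
Definition n_absolutely_pure (n : nat) (A : act S) : Prop :=
  forall E : list (equation 'I_n A), consistent E ->
    exists b : 'I_n -> A, is_solution id E b.

Definition almost_pure (A : act S) : Prop := n_absolutely_pure 1 A.

Definition absolutely_pure (A : act S) : Prop :=
  forall n, n_absolutely_pure n A.

End Acts.

(* Main.v *)
Require Import Defs.
From mathcomp Require Import all_boot.
From Stdlib Require Import ProofIrrelevance FunctionalExtensionality PropExtensionality ClassicalEpsilon.
From Stdlib Require Lists.List.
Set Implicit Arguments. Unset Strict Implicit. Unset Printing Implicit Defensive.

Lemma mychoice (X Y : Type) (P : X -> Y -> Prop) :
  (forall x, exists y, P x y) -> exists f : X -> Y, forall x, P x (f x).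
Proof.
move=> H; exists (fun x => proj1_sig (constructive_indefinite_description _ (H x))).
move=> x; exact: proj2_sig (constructive_indefinite_description _ (H x)).
Qed.

Definition decP (P : Prop) : {P} + {~ P} := excluded_middle_informative P.

Lemma sig_eq (T : Type) (Q : T -> Prop) (p q : {x | Q x}) :
  proj1_sig p = proj1_sig q -> p = q.
Proof. by move=> H; apply: eq_sig_hprop => // x u v; apply: proof_irrelevance. Qed.

Section Quot.
Variables (S : monoid) (A : act S) (rho : A -> A -> Prop) (Hr : is_congruence rho).

Definition qcar := {p : A -> Prop | exists a, p = rho a}.

Lemma rho_refl a : rho a a. Proof. by case: Hr => H _; apply: H. Qed.
Lemma rho_sym a b : rho a b -> rho b a. Proof. by case: Hr => _ [H _]; apply: H. Qed.
Lemma rho_trans a b c : rho a b -> rho b c -> rho a c. Proof. by case: Hr => _ [_ [H _]]; apply: H. Qed.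
Lemma rho_comp a b s : rho a b -> rho (aact a s) (aact b s). Proof. by case: Hr => _ [_ [_ H]]; apply: H. Qed.

Lemma qact_set a s :
  (fun v => exists u, rho a u /\ rho (aact u s) v) = rho (aact a s).
Proof.
apply: functional_extensionality => v; apply: propositional_extensionality; split.
- by case=> u [Hau Huv]; apply: rho_trans (rho_comp s Hau) Huv.
- by move=> H; exists a; split => //; apply: rho_refl.
Qed.

Lemma qact_ok (p : qcar) (s : S) :
  exists a', (fun v => exists u, proj1_sig p u /\ rho (aact u s) v) = rho a'.
Proof. by case: p => p [a Ha] /=; exists (aact a s); rewrite Ha; apply: qact_set. Qed.

Definition qaact (p : qcar) (s : S) : qcar := exist _ _ (qact_ok p s).
Definition cls (a : A) : qcar := exist _ (rho a) (ex_intro _ a erefl).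

Lemma qaact_cls a s : qaact (cls a) s = cls (aact a s).
Proof. by apply: sig_eq => /=; apply: qact_set. Qed.

Lemma cls_surj (p : qcar) : exists a, cls a = p.
Proof. by case: p => p [a Ha]; exists a; apply: sig_eq => /=. Qed.

Lemma cls_eq a b : cls a = cls b <-> rho a b.
Proof.
split.
- move=> H; have := f_equal (@proj1_sig _ _) H => /= H2.
  have : rho b b by apply: rho_refl.
  by rewrite -H2.
- move=> H; apply: sig_eq => /=.
  apply: functional_extensionality => v; apply: propositional_extensionality; split.
  + by move=> Hav; apply: rho_trans (rho_sym H) Hav.
  + by move=> Hbv; apply: rho_trans H Hbv.
Qed.

Lemma qaact1 p : qaact p (mone S) = p.
Proof. by case: (cls_surj p) => a <-; rewrite qaact_cls aact1. Qed.
Lemma qaactM p s t : qaact p (mmul s t) = qaact (qaact p s) t.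
Proof. by case: (cls_surj p) => a <-; rewrite !qaact_cls aactM. Qed.

Definition quot_act : act S := Act qaact1 qaactM.
End Quot.

Section Eqs.
Variable S : monoid.

Lemma sol_app X (A B : act S) (f : A -> B) (E1 E2 : list (equation X A)) b :
  is_solution f E1 b -> is_solution f E2 b -> is_solution f (List.app E1 E2) b.
Proof. by move=> H1 H2 q /List.in_app_iff [] H; [apply: H1 | apply: H2]. Qed.

Lemma sol_app_inv X (A B : act S) (f : A -> B) (E1 E2 : list (equation X A)) b :
  is_solution f (List.app E1 E2) b -> is_solution f E1 b /\ is_solution f E2 b.
Proof.
by move=> H; split=> q Hq; apply: H; apply/List.in_app_iff; [left|right].
Qed.

Lemma sol_flat X Y (A B : act S) (f : A -> B) (g : Y -> list (equation X A)) l b :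
  (forall y, List.In y l -> is_solution f (g y) b) ->
  is_solution f (List.flat_map g l) b.
Proof. by move=> H q /List.in_flat_map [y [Hy Hq]]; apply: (H y). Qed.

Lemma sol_flat_inv X Y (A B : act S) (f : A -> B) (g : Y -> list (equation X A)) l b :
  is_solution f (List.flat_map g l) b ->
  forall y, List.In y l -> is_solution f (g y) b.
Proof. by move=> H y Hy q Hq; apply: H; apply/List.in_flat_map; exists y. Qed.

Definition term (A : act S) := (option A * S)%type.

Definition evalT (A B : act S) (e : A -> B) (x : B) (p : term A) : B :=
  match p.1 with None => aact x p.2 | Some a => aact (e a) p.2 end.

Definition scaleT (A : act S) (p : term A) (s : S) : term A := (p.1, mmul p.2 s).

Lemma evalT_scale (A B : act S) (e : A -> B) x p s :
  evalT e x (scaleT p s) = aact (evalT e x p) s.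
Proof. by case: p => [[a|] t]; rewrite /evalT /= aactM. Qed.

Lemma evalT_morph (A B : act S) (e : A -> B) (c : A) p :
  is_morphism e -> evalT e (e c) p = e (evalT id c p).
Proof. by move=> He; case: p => [[a|] t]; rewrite /evalT /= He. Qed.

Lemma evalT_some (A B : act S) (e : A -> B) x y p :
  p.1 <> None -> evalT e x p = evalT e y p.
Proof. by case: p => [[a|] t] //=. Qed.

Definition mkeq (A : act S) (p q : term A) : list (equation 'I_1 A) :=
  match p, q with
  | (None, s), (None, t) => [:: @EqVar _ _ A ord0 s ord0 t]
  | (None, s), (Some a, t) => [:: EqConst ord0 s (aact a t)]
  | (Some a, s), (None, t) => [:: EqConst ord0 t (aact a s)]
  | _, _ => [::]
  end.

Lemma mkeq_sound (A B : act S) (e : A -> B) x p q :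
  is_morphism e -> evalT e x p = evalT e x q ->
  is_solution e (mkeq p q) (fun _ => x).
Proof.
move=> He; case: p => [[a|] s]; case: q => [[a'|] t]; rewrite /evalT /= => H r //=;
  case=> // <-; rewrite ?He //.
Qed.

Lemma mkeq_full (A B : act S) (e : A -> B) (x : B) (c : A) p q :
  is_morphism e -> injective e -> evalT e x p = evalT e x q ->
  is_solution id (mkeq p q) (fun _ => c) -> evalT id c p = evalT id c q.
Proof.
move=> He Hi; case: p => [[a|] s]; case: q => [[a'|] t]; rewrite /evalT /=.
- by move=> H _; apply: Hi; rewrite !He.
- by move=> _ H; have := H _ (or_introl erefl).
- by move=> _ H; have := H _ (or_introl erefl).
- by move=> _ H; have := H _ (or_introl erefl).
Qed.
End Eqs.

Section Step.
Variables (S : monoid) (A : act S) (n : nat) (E : list (equation 'I_n.+1 A)).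

Notation FA := (free_act S n.+1).

Definition varpairs (q : equation 'I_n.+1 A) : list (FA * FA) :=
  match q with EqVar x s y t => [:: ((x, s) : FA, (y, t) : FA)] | _ => [::] end.
Definition Rv := List.flat_map varpairs E.
Definition rhoE : FA -> FA -> Prop := gen_congruence Rv.

Lemma rhoE_cong : is_congruence rhoE.
Proof.
rewrite /rhoE /gen_congruence /is_congruence.
split; [|split; [|split]].
- by move=> a rho [Hr _] _; apply: Hr.
- by move=> a c H rho Hc HR; have [_ [Hs _]] := Hc; apply: Hs; apply: H.
- move=> a c d H1 H2 rho Hc HR; have [_ [_ [Ht _]]] := Hc.
  by apply: Ht (H1 rho Hc HR) (H2 rho Hc HR).
- by move=> a c s H rho Hc HR; have [_ [_ [_ Hm]]] := Hc; apply: Hm; apply: H.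
Qed.

Definition G : act S := quot_act rhoE_cong.
Definition clsG (w : FA) : G := @cls S FA rhoE w.

Lemma clsG_act w s : aact (clsG w) s = clsG (aact w s).
Proof. exact: qaact_cls. Qed.

Lemma clsG_eq w w' : clsG w = clsG w' <-> rhoE w w'.
Proof. exact: cls_eq rhoE_cong w w'. Qed.

Lemma clsG_surj (g : G) : exists w, clsG w = g.
Proof. exact: cls_surj. Qed.

Lemma rhoE_var x s y t : List.In (@EqVar _ _ A x s y t) E -> clsG (x, s) = clsG (y, t).
Proof.
move=> Hq; apply/clsG_eq => rho Hc HR; apply: (HR (((x, s) : FA), ((y, t) : FA))).
by apply/List.in_flat_map; exists (@EqVar _ _ A x s y t); split => //=; left.
Qed.

Lemma G_fp : fin_presented G.
Proof.
exists n.+1, Rv, clsG; split; [|split].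
- by move=> a s; rewrite clsG_act.
- exact: clsG_surj.
- exact: clsG_eq.
Qed.

Definition KT := option ('I_n.+1 * S * A)%type.
Definition kconst (q : equation 'I_n.+1 A) : list KT :=
  match q with EqConst i s a => [:: Some (i, s, a)] | _ => [::] end.
Definition kinds : list KT := None :: List.flat_map kconst E.
Definition gen_rep (k : KT) : FA :=
  match k with None => (ord_max, mone S) | Some (i, s, a) => (i, s) end.
Definition gen_of (k : KT) : G := clsG (gen_rep k).

Lemma In_kinds_const i s a : List.In (Some (i, s, a)) kinds -> List.In (EqConst i s a) E.
Proof.
case=> // /List.in_flat_map [q [Hq Hk]].
by case: q Hq Hk => //= i' s' a' Hq [] // [<- <- <-].
Qed.

Definition Pg (g : G) : Prop := exists k t, List.In k kinds /\ g = aact (gen_of k) t.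

Lemma HP : subact_closed Pg.
Proof. by move=> g s [k [t [Hk ->]]]; exists k, (mmul t s); split => //; rewrite aactM. Qed.

Lemma P_fg : fin_generated Pg.
Proof.
exists (List.map gen_of kinds); split.
- move=> g /List.in_map_iff [k [<- Hk]]; exists k, (mone S); split => //.
  by rewrite aact1.
- move=> g; split.
  + case=> k [t [Hk ->]]; exists (gen_of k), t; split => //.
    by apply/List.in_map_iff; exists k.
  + case=> g0 [t [/List.in_map_iff [k [<- Hk]] ->]]; by exists k, t.
Qed.

Lemma P_gen k : List.In k kinds -> Pg (gen_of k).
Proof. by move=> Hk; exists k, (mone S); rewrite aact1. Qed.

Definition Hact : act S := sub_act HP.

Variables (B : act S) (e : A -> B) (b : 'I_n.+1 -> B).
Hypotheses (He : is_morphism e) (Hinj : injective e) (Hb : is_solution e E b).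

Definition beval (w : FA) : B := aact (b w.1) w.2.

Lemma beval_act w s : beval (aact w s) = aact (beval w) s.
Proof. by case: w => x r; rewrite /beval /= aactM. Qed.

Lemma beval_rho w w' : rhoE w w' -> beval w = beval w'.
Proof.
move=> H; apply: (H (fun u v => beval u = beval v)).
- rewrite /is_congruence; split; [by []|split; [|split]].
  + by move=> u v Huv; rewrite Huv.
  + by move=> u v r H1 H2; rewrite H1 H2.
  + by move=> u v s Huv; rewrite !beval_act Huv.
- move=> p /List.in_flat_map [q [Hq Hp]].
  case: q Hq Hp => //= x s y t Hq [] // <- /=.
  by have := Hb Hq.
Qed.

Definition tmk (k : KT) : term A :=
  match k with None => (None, mone S) | Some (i, s, a) => (Some a, mone S) end.

Lemma beval_gen k : List.In k kinds -> beval (gen_rep k) = evalT e (b ord_max) (tmk k).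
Proof.
case: k => [[[i s] a]|] Hk; rewrite /beval /evalT /=.
- by rewrite aact1; have := Hb (In_kinds_const Hk).
- by [].
Qed.

Variables (m : nat) (R : list (free_act S m * free_act S m)) (f : free_act S m -> Hact).
Hypotheses (Hfm : is_morphism f) (Hfs : forall h, exists u, f u = h)
  (Hfk : forall u v, f u = f v <-> gen_congruence R u v).
Variables (kl : 'I_m -> KT) (tl : 'I_m -> S).
Hypothesis Hkl : forall l, List.In (kl l) kinds /\
  proj1_sig (f ((l, mone S) : free_act S m)) = aact (gen_of (kl l)) (tl l).
Variable uk : KT -> free_act S m.
Hypothesis Huk : forall k, List.In k kinds -> proj1_sig (f (uk k)) = gen_of k.

Definition tm (u : free_act S m) : term A := scaleT (tmk (kl u.1)) (mmul (tl u.1) u.2).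

Lemma f_act u s : proj1_sig (f (aact u s)) = aact (proj1_sig (f u)) s.
Proof. by rewrite Hfm. Qed.

Lemma f_val u : proj1_sig (f u) = clsG (aact (gen_rep (kl u.1)) (mmul (tl u.1) u.2)).
Proof.
case: u => l s /=.
have -> : ((l, s) : free_act S m) = aact ((l, mone S) : free_act S m) s.
  by rewrite /= /free_aact /= mmul1s.
rewrite f_act (proj2 (Hkl l)) /gen_of !clsG_act.
by rewrite -aactM.
Qed.

Lemma F1 u w : clsG w = proj1_sig (f u) -> beval w = evalT e (b ord_max) (tm u).
Proof.
rewrite f_val => /clsG_eq /beval_rho ->.
rewrite beval_act beval_gen; last exact: (proj1 (Hkl _)).
by rewrite /tm evalT_scale.
Qed.

Definition Sigma1 : list (equation 'I_1 A) :=
  List.app (List.flat_map (fun p => mkeq (tm p.1) (tm p.2)) R)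
           (List.flat_map (fun k => mkeq (tmk k) (tm (uk k))) kinds).

Lemma evB_pair p : List.In p R -> evalT e (b ord_max) (tm p.1) = evalT e (b ord_max) (tm p.2).
Proof.
move=> Hp.
have Hf : f p.1 = f p.2 by apply/Hfk => rho Hc HR; apply: HR.
have [w Hw] := clsG_surj (proj1_sig (f p.1)).
rewrite -(F1 Hw); apply: F1; by rewrite Hw Hf.
Qed.

Lemma evB_back k : List.In k kinds ->
  evalT e (b ord_max) (tmk k) = evalT e (b ord_max) (tm (uk k)).
Proof. by move=> Hk; rewrite -beval_gen //; apply: F1; rewrite Huk. Qed.

Lemma Sigma1_sol : is_solution e Sigma1 (fun _ => b ord_max).
Proof.
apply: sol_app; apply: sol_flat.
- by move=> p Hp; apply: mkeq_sound => //; apply: evB_pair.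
- by move=> k Hk; apply: mkeq_sound => //; apply: evB_back.
Qed.

Lemma Sigma1_cons : consistent Sigma1.
Proof. exists B, e; split => //; split => //; exists (fun _ => b ord_max); exact: Sigma1_sol. Qed.

Variable c : A.
Hypothesis Hc : is_solution id Sigma1 (fun _ => c).

Lemma evA_pair p : List.In p R -> evalT id c (tm p.1) = evalT id c (tm p.2).
Proof.
move=> Hp; apply: (mkeq_full (e := e) (x := b ord_max)) => //.
- exact: evB_pair.
- exact: sol_flat_inv (proj1 (sol_app_inv Hc)) _ Hp.
Qed.

Lemma evA_back k : List.In k kinds -> evalT id c (tmk k) = evalT id c (tm (uk k)).
Proof.
move=> Hk; apply: (mkeq_full (e := e) (x := b ord_max)) => //.
- exact: evB_back.
- exact: sol_flat_inv (proj2 (sol_app_inv Hc)) _ Hk.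
Qed.

Definition phi' (u : free_act S m) : A := evalT id c (tm u).

Lemma phi'_act u s : phi' (aact u s) = aact (phi' u) s.
Proof.
case: u => l r; rewrite /phi' /tm !evalT_scale /= -aactM.
by rewrite /free_aact /= mmulA.
Qed.

Lemma phi'_resp u v : f u = f v -> phi' u = phi' v.
Proof.
move=> /Hfk H; apply: (H (fun u v => phi' u = phi' v)).
- rewrite /is_congruence; split; [by []|split; [|split]].
  + by move=> u1 v1 H1; rewrite H1.
  + by move=> u1 v1 r H1 H2; rewrite H1 H2.
  + by move=> u1 v1 s H1; rewrite !phi'_act H1.
- by move=> p Hp; apply: evA_pair.
Qed.

Lemma phiG_ex (g : G) : exists u, Pg g -> proj1_sig (f u) = g.
Proof.
case: (decP (Pg g)) => Hg.
- have [u Hu] := Hfs (exist _ g Hg); exists u => _; by rewrite Hu.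
- by exists (uk None).
Qed.

Definition phiG (g : G) : A :=
  phi' (proj1_sig (constructive_indefinite_description _ (phiG_ex g))).

Lemma phiG_spec u g : proj1_sig (f u) = g -> phiG g = phi' u.
Proof.
move=> Hu; rewrite /phiG.
case: (constructive_indefinite_description _ _) => u' Hu' /=.
apply: phi'_resp; apply: sig_eq; rewrite Hu' //.
by rewrite -Hu; exact: (proj2_sig (f u)).
Qed.

Lemma phiG_act g s : Pg g -> phiG (aact g s) = aact (phiG g) s.
Proof.
move=> Hg; have [u Hu] := Hfs (exist _ g Hg).
have Hu1 : proj1_sig (f u) = g by rewrite Hu.
rewrite (phiG_spec Hu1) (@phiG_spec (aact u s)) ?phi'_act //.
by rewrite f_act Hu1.
Qed.

Lemma phiG_gen k : List.In k kinds -> phiG (gen_of k) = evalT id c (tmk k).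
Proof. by move=> Hk; rewrite (phiG_spec (Huk Hk)) (evA_back Hk). Qed.

Lemma phiG_max s : phiG (clsG (ord_max, s)) = aact c s.
Proof.
have -> : clsG (ord_max, s) = aact (gen_of None) s.
  by rewrite /gen_of clsG_act /= /free_aact /= mmul1s.
rewrite phiG_act; last by apply: P_gen; left.
by rewrite phiG_gen /=; [rewrite /evalT /= aact1 | left].
Qed.

Definition Bcar := (A + {g : G | ~ Pg g})%type.

Definition normB (g : G) : Bcar :=
  match decP (Pg g) with left _ => inl (phiG g) | right np => inr (exist _ g np) end.

Definition bact (x : Bcar) (s : S) : Bcar :=
  match x with inl a => inl (aact a s) | inr g => normB (aact (proj1_sig g) s) end.

Lemma normB_P g : Pg g -> normB g = inl (phiG g).
Proof. by rewrite /normB; case: (decP _). Qed.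

Lemma normB_nP g (np : ~ Pg g) : normB g = inr (exist _ g np).
Proof.
rewrite /normB; case: (decP _) => // np'.
by rewrite (proof_irrelevance _ np np').
Qed.

Lemma normB_act g s : bact (normB g) s = normB (aact g s).
Proof.
rewrite /normB; case: (decP (Pg g)) => Hg //=.
have Hgs : Pg (aact g s) by apply: HP.
by rewrite -/(normB (aact g s)) normB_P // phiG_act.
Qed.

Lemma bact1 x : bact x (mone S) = x.
Proof.
case: x => [a|[g np]] /=; first by rewrite aact1.
have -> : qaact rhoE_cong g (mone S) = g by exact: (@aact1 S G g).
by rewrite normB_nP.
Qed.

Lemma bactM x s t : bact x (mmul s t) = bact (bact x s) t.
Proof.
case: x => [a|[g np]] /=; first by rewrite aactM.
have -> : qaact rhoE_cong g (mmul s t) = qaact rhoE_cong (qaact rhoE_cong g s) t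
  by exact: (@aactM S G g s t).
by rewrite (normB_act (qaact rhoE_cong g s) t).
Qed.

Definition B' : act S := Act bact1 bactM.

Lemma inl_morph : is_morphism (fun a : A => (inl a : B')).
Proof. by []. Qed.

Lemma inl_inj : injective (fun a : A => (inl a : B')).
Proof. by move=> a a' [->]. Qed.

Definition redeq (q : equation 'I_n.+1 A) : list (equation 'I_n A) :=
  match q with
  | EqVar x s y t =>
      match unlift ord_max x, unlift ord_max y with
      | Some x', Some y' => [:: @EqVar _ _ A x' s y' t]
      | None, Some y' => [:: EqConst y' t (aact c s)]
      | Some x', None => [:: EqConst x' s (aact c t)]
      | None, None => [::]
      end
  | EqConst x s a =>
      match unlift ord_max x with Some x' => [:: EqConst x' s a] | None => [::] end
  end.

Definition E' := List.flat_map redeq E.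

Definition bsol (j : 'I_n) : B' := normB (clsG (lift ord_max j, mone S)).

Lemma bsol_act j s : bact (bsol j) s = normB (clsG (lift ord_max j, s)).
Proof. by rewrite /= /bsol normB_act clsG_act /= /free_aact /= mmul1s. Qed.

Lemma normB_max s : normB (clsG (ord_max, s)) = inl (aact c s).
Proof.
rewrite normB_P ?phiG_max //.
exists None, s; split; first by left.
by rewrite /gen_of clsG_act /= /free_aact /= mmul1s.
Qed.

Lemma normB_const x s a : List.In (EqConst x s a) E -> normB (clsG (x, s)) = inl a.
Proof.
move=> Hq.
have Hk : List.In (Some (x, s, a)) kinds.
  by right; apply/List.in_flat_map; exists (EqConst x s a); split => //; left.
have Hgen : clsG (x, s) = gen_of (Some (x, s, a)) by [].
rewrite Hgen normB_P; last exact: P_gen.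
by rewrite phiG_gen //= /evalT /= aact1.
Qed.

Lemma E'_sol : is_solution (fun a : A => (inl a : B')) E' bsol.
Proof.
apply: sol_flat => q Hq.
case: q Hq => [x s y t|x s a] Hq /=.
- case: (unliftP ord_max x) => [x' Ex|Ex]; case: (unliftP ord_max y) => [y' Ey|Ey];
    move=> r [] // <- /=.
  + by rewrite !bsol_act -Ex -Ey (rhoE_var Hq).
  + by rewrite bsol_act -Ex (rhoE_var Hq) Ey normB_max.
  + by rewrite bsol_act -Ey -(rhoE_var Hq) Ex normB_max.
- case: (unliftP ord_max x) => [x' Ex|Ex] r [] // <- /=.
  by rewrite bsol_act -Ex (normB_const Hq).
Qed.

Lemma E'_cons : consistent E'.
Proof.
exists B', (fun a : A => (inl a : B')); split; first exact: inl_morph.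
split; first exact: inl_inj.
by exists bsol; apply: E'_sol.
Qed.

Variable d : 'I_n -> A.
Hypothesis Hd : is_solution id E' d.

Definition bfull (x : 'I_n.+1) : A :=
  match unlift ord_max x with Some j => d j | None => c end.

Lemma cmax s t : clsG (ord_max, s) = clsG (ord_max, t) -> aact c s = aact c t.
Proof. by move=> H; rewrite -!phiG_max H. Qed.

Lemma final : is_solution id E bfull.
Proof.
move=> q Hq.
have Hd' := sol_flat_inv Hd Hq.
case: q Hq Hd' => [x s y t|x s a] Hq /=; rewrite /bfull.
- case: (unliftP ord_max x) => [x' Ex|Ex]; case: (unliftP ord_max y) => [y' Ey|Ey] Hd'.
  + by have := Hd' _ (or_introl erefl).
  + by have := Hd' _ (or_introl erefl).
  + by have := Hd' _ (or_introl erefl).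
  + by apply: cmax; have := rhoE_var Hq; rewrite Ex Ey.
- case: (unliftP ord_max x) => [x' Ex|Ex] Hd'.
  + by have := Hd' _ (or_introl erefl).
  + have := normB_const Hq; rewrite Ex normB_max; by case.
Qed.

End Step.

Lemma step (S : monoid) (A : act S) (n : nat) :
  right_coherent S -> almost_pure A -> n_absolutely_pure n A ->
  n_absolutely_pure n.+1 A.
Proof.
move=> Hcoh Hap IH E [B [e [He [Hinj [b Hb]]]]].
have [m [R [f [Hfm [Hfs Hfk]]]]] := Hcoh _ (G_fp E) _ (@HP _ _ _ E) (P_fg E).
have Hex : forall l : 'I_m, exists kt : (KT A n * S)%type,
    List.In kt.1 (kinds E) /\
    proj1_sig (f ((l, mone S) : free_act S m)) = aact (gen_of E kt.1) kt.2.
  move=> l.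
  have [k [t [Hk Ht]]] := proj2_sig (f ((l, mone S) : free_act S m)).
  by exists (k, t).
have [klt Hklt] := mychoice Hex.
have [u0 _] := Hfs (exist _ (gen_of E None) (P_gen (or_introl erefl))).
have Hexu : forall k : KT A n, exists u : free_act S m,
    List.In k (kinds E) -> proj1_sig (f u) = gen_of E k.
  move=> k; case: (decP (List.In k (kinds E))) => Hk.
  - have [u Hu] := Hfs (exist _ (gen_of E k) (P_gen Hk)).
    by exists u => _; rewrite Hu.
  - by exists u0.
have [uk Huk] := mychoice Hexu.
have Hcons := Sigma1_cons He Hinj Hb Hfm Hfk Hklt Huk.
have [c' Hc'] := Hap _ Hcons.
have Hc : is_solution id (Sigma1 E R (fun l => (klt l).1) (fun l => (klt l).2) uk)
            (fun _ => c' ord0).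
  have -> : (fun _ : 'I_1 => c' ord0) = c'.
    by apply: functional_extensionality => i; rewrite (ord1 i).
  exact: Hc'.
have [d Hd] := IH _ (E'_cons He Hinj Hb Hfm Hfs Hfk Hklt Huk Hc).
exists (bfull (c' ord0) d).
exact: (final He Hinj Hb Hfm Hfs Hfk Hklt Huk Hc Hd).
Qed.

Theorem mainTheorem1 (S : monoid) (A : act S) :
  right_coherent S -> (almost_pure A <-> absolutely_pure A).
Proof.
move=> Hcoh; split.
- move=> Hap n; elim: n => [|n IH].
  + move=> E _.
    have b : 'I_0 -> A by case.
    exists b => q; case: q => [x|x]; by case: x.
  + exact: step.
- by move=> H; apply: H.
Qed.
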